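(* For all integers $s\geq 1$, $A_{231,321}(K_{s,2}^\alpha)=2^{s-1}(s-1)+1$.
   Context: $K^\alpha_{s,2}$ is the poset on $[2s]$ whose order is generated by the covering relations $i\lessdot i+1$ for $1\le i\le s-1$ and $i\lessdot i+s$ for $1\le i\le s$ (the comb $K_{s,2}$ with $\alpha$-labeling $e_{i,j}\mapsto (j-1)s+i$). A linear extension is a permutation of $[2s]$ in which $x$ precedes $y$ whenever $x<y$ in the poset. $A_{231,321}(P)$ denotes the number of linear extensions of $P$ that avoid both patterns $231$ and $321$. *)

(* Defs.v *)
From mathcomp Require Import all_boot.
Set Implicit Arguments. Unset Strict Implicit. Unset Printing Implicit Defensive.

(* Permutations of [n] = {1..n} are represented as sequences (one-line notation)
   w = [:: w_1; ...; w_n] that are rearrangements of iota 1 n. *)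

(* Covering relations of the comb poset K^alpha_{s,2} on [2s]:
   i <. i+1 for 1 <= i <= s-1, and i <. i+s for 1 <= i <= s. *)
Definition comb_cover (s x y : nat) : bool :=
  [&& 1 <= x, x <= s - 1 & y == x + 1] || [&& 1 <= x, x <= s & y == x + s].

(* Strict order of the poset: transitive closure of the covering relation.
   reach s k x = elements reachable from x by a nonempty chain of at most k
   covers (within [2s]); every chain has length < 2s. *)
Fixpoint comb_reach (s k x : nat) : seq nat :=
  if k is k'.+1 then
    [seq y <- iota 1 (2 * s) |
      comb_cover s x y || has (fun z => comb_cover s z y) (comb_reach s k' x)]
  else [::].

Definition comb_lt (s x y : nat) : bool := y \in comb_reach s (2 * s) x.

Definition precedes (w : seq nat) (x y : nat) : bool := index x w < index y w.

Definition lin_ext (s : nat) (w : seq nat) : bool :=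
  perm_eq w (iota 1 (2 * s)) &&
  all (fun x => all (fun y => comb_lt s x y ==> precedes w x y) (iota 1 (2 * s)))
      (iota 1 (2 * s)).

Definition contains231 (w : seq nat) : bool :=
  let n := size w in
  has (fun i => has (fun j => has (fun k =>
        [&& i < j, j < k & (nth 0 w k < nth 0 w i < nth 0 w j)])
      (iota 0 n)) (iota 0 n)) (iota 0 n).

Definition contains321 (w : seq nat) : bool :=
  let n := size w in
  has (fun i => has (fun j => has (fun k =>
        [&& i < j, j < k & (nth 0 w k < nth 0 w j < nth 0 w i)])
      (iota 0 n)) (iota 0 n)) (iota 0 n).

Definition A231_321_comb (s : nat) : nat :=
  count (fun w => lin_ext s w && ~~ contains231 w && ~~ contains321 w)
        (permutations (iota 1 (2 * s))).

(* Main.v *)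
Require Import Defs.
From mathcomp Require Import all_boot zify.
Set Warnings "-notation-overridden".
Set Implicit Arguments. Unset Strict Implicit. Unset Printing Implicit Defensive.

Fixpoint has2 (Q : nat -> nat -> bool) (t : seq nat) : bool :=
  if t is b :: t' then has (Q b) t' || has2 Q t' else false.

Fixpoint Bad (t : seq nat) : bool :=
  if t is x :: t' then has2 (fun b c => (c < x) && (c < b)) t' || Bad t' else false.

Lemma has2P (Q : nat -> nat -> bool) t : reflect (exists j k, [/\ j < k, k < size t & Q (nth 0 t j) (nth 0 t k)]) (has2 Q t).
Proof.
elim: t => [|b t IH] /=.
  by apply: (iffP idP) => // -[j [k [_ + _]]].
apply: (iffP orP).
  case=> [/hasP [c ct Qbc]|/IH [j [k [jk kt Q2]]]].
    exists 0, (index c t).+1; split => //; last by rewrite /= nth_index.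
    by rewrite ltnS index_mem.
  by exists j.+1, k.+1.
case=> [[|j] [[|k] [//= jk kt Q2]]].
  by left; apply/hasP; exists (nth 0 t k) => //; apply: mem_nth.
by right; apply/IH; exists j, k.
Qed.

Lemma BadP w : reflect (exists i j k, [/\ i < j, j < k, k < size w &
   (nth 0 w k < nth 0 w i) && (nth 0 w k < nth 0 w j)]) (Bad w).
Proof.
elim: w => [|x t IH] /=.
  by apply: (iffP idP) => // -[i [j [k [_ _ + _]]]].
apply: (iffP orP).
  case=> [/has2P [j [k [jk kt Q2]]]|/IH [i [j [k [ij jk kt Q2]]]]].
    by exists 0, j.+1, k.+1; split => //=; rewrite andbC.
  by exists i.+1, j.+1, k.+1.
case=> [[|i] [[|j] [[|k] [//= ij jk kt Q2]]]].
  by left; apply/has2P; exists j, k; split => //; rewrite andbC.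
by right; apply/IH; exists i, j, k.
Qed.

Definition trip (R : nat -> nat -> nat -> bool) (w : seq nat) : bool :=
  let n := size w in
  has (fun i => has (fun j => has (fun k =>
        [&& i < j, j < k & R (nth 0 w i) (nth 0 w j) (nth 0 w k)])
      (iota 0 n)) (iota 0 n)) (iota 0 n).

Lemma tripP (R : nat -> nat -> nat -> bool) w : reflect (exists i j k, [/\ i < j, j < k, k < size w &
   R (nth 0 w i) (nth 0 w j) (nth 0 w k)]) (trip R w).
Proof.
apply: (iffP hasP).
  move=> [i _ /hasP [j _ /hasP [k]]]; rewrite mem_iota => /andP [_ kw] /and3P [ij jk H].
  by exists i, j, k.
move=> [i [j [k [ij jk kw H]]]].
exists i; first by rewrite mem_iota; lia.
apply/hasP; exists j; first by rewrite mem_iota; lia.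
apply/hasP; exists k; first by rewrite mem_iota; lia.
by rewrite ij jk H.
Qed.

Lemma contains_Bad w : uniq w -> (contains231 w || contains321 w) = Bad w.
Proof.
move=> uw.
have -> : contains231 w = trip (fun a b c => c < a < b) w by [].
have -> : contains321 w = trip (fun a b c => c < b < a) w by [].
apply/idP/idP.
  case/orP=> /tripP [i [j [k [ij jk kw /andP [H1 H2]]]]]; apply/BadP; exists i, j, k;
   split => //; apply/andP; split => //; exact: ltn_trans H1 H2.
case/BadP=> [i [j [k [ij jk kw /andP [H1 H2]]]]].
have : nth 0 w i != nth 0 w j.
  rewrite nth_uniq ?neq_ltn ?ij //; [exact: ltn_trans ij (ltn_trans jk kw)|exact: ltn_trans jk kw].
case: (ltngtP (nth 0 w i) (nth 0 w j)) => // H3 _.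
  by apply/orP; left; apply/tripP; exists i, j, k; split => //; rewrite H1.
by apply/orP; right; apply/tripP; exists i, j, k; split => //; rewrite H2.
Qed.
Fixpoint Cov (s : nat) (t : seq nat) : bool :=
  if t is x :: t' then ~~ has (fun y => comb_cover s y x) t' && Cov s t' else true.

Lemma cover_lt s x y : comb_cover s x y -> x < y.
Proof. by rewrite /comb_cover => /orP [/and3P [? ? /eqP ->]|/and3P [? ? /eqP ->]]; lia. Qed.

Lemma index_cons' (x y : nat) t : index x (y :: t) = if y == x then 0 else (index x t).+1.
Proof. by []. Qed.

Lemma CovP s w : uniq w -> reflect (forall x y, x \in w -> y \in w ->
  comb_cover s x y -> index x w < index y w) (Cov s w).
Proof.
elim: w => [|a t IH] /=.
  by move=> _; apply: ReflectT => x y.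
case/andP=> ant ut; apply: (iffP andP).
  case=> nh /(IH ut) H x y; rewrite !inE.
  case: (eqVneq x a) => [->|xa] /=; case: (eqVneq y a) => [->|ya] /=.
  - by move=> _ _ /cover_lt; rewrite ltnn.
  - by [].
  - by move=> xt _ cxa; case/negP: nh; apply/hasP; exists x.
  - by rewrite ltnS; exact: H.
move=> H; split.
  apply/hasP => -[y yt cya]; have := H y a.
  rewrite !inE yt eqxx orbT => /(_ isT isT cya).
  rewrite /=; case: (a == y) => //.
case: (IH ut) => // nC; exfalso; apply: nC => x y xt yt cxy; have := H x y.
rewrite !inE xt yt !orbT => /(_ isT isT cxy).
have xa : (a == x) = false by apply/negbTE; apply: contraNneq ant => ->.
have ya : (a == y) = false by apply/negbTE; apply: contraNneq ant => ->.
by rewrite /= xa ya.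
Qed.

Lemma reach_sub s k x z : z \in comb_reach s k x -> z \in iota 1 (2 * s).
Proof. by case: k => [|k] //=; rewrite mem_filter => /andP []. Qed.

Lemma linext_Cov s w : 0 < s -> perm_eq w (iota 1 (2 * s)) -> lin_ext s w = Cov s w.
Proof.
move=> s0 pw; have uw : uniq w by rewrite (perm_uniq pw) iota_uniq.
have mw := perm_mem pw.
rewrite /lin_ext pw /=; apply/idP/idP.
  move=> /allP H; apply/(CovP s uw) => x y xw yw cxy.
  have := H x; rewrite -mw => /(_ xw) /allP /(_ y); rewrite -mw => /(_ yw).
  rewrite /comb_lt /precedes; apply: implyP.
  have yU : y \in iota 1 (2 * s) by rewrite -mw.
  case E: (2 * s) => [|k]; first by lia.
  rewrite /= mem_filter cxy /=; apply/implyP => /implyP; apply; exact: yU.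
move/(CovP s uw) => H; apply/allP => x; rewrite -mw => xw; apply/allP => y yU.
apply/implyP; rewrite /comb_lt /precedes; move: y {yU}.
have mw' : forall z, z \in iota 1 (2 * s) -> z \in w by move=> z; rewrite mw.
elim: (2 * s) => [|k IH] y //=.
rewrite mem_filter => /andP [/orP [cxy|/hasP [z zr czy]] yU].
  by apply: H => //; apply: mw'.
apply: ltn_trans (IH z zr) _.
by apply: H => //; apply: mw'; [apply: reach_sub zr|].
Qed.

Lemma has2_false (Q : nat -> nat -> bool) t :
  (forall b c, b \in t -> c \in t -> ~~ Q b c) -> has2 Q t = false.
Proof.
elim: t => [|b t IH] //= H.
rewrite IH ?orbF; last by move=> x y xt yt; apply: H; rewrite inE ?xt ?yt orbT.
apply/negbTE/hasPn => c ct; apply: H; rewrite inE ?eqxx ?ct ?orbT //.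
Qed.

Lemma has2_cat_false (Q : nat -> nat -> bool) u v :
  (forall b c, c \in v -> ~~ Q b c) -> has2 Q (u ++ v) = has2 Q u.
Proof.
move=> H; elim: u => [|b u IH] /=.
  by apply: has2_false => x y _ yv; apply: H.
rewrite IH has_cat; congr (_ || _).
have -> : has (Q b) v = false by apply/negbTE/hasPn => c cv; apply: H.
by rewrite orbF.
Qed.

Lemma Bad_cons_small x t : (forall y, y \in t -> x < y) -> Bad (x :: t) = Bad t.
Proof.
move=> H /=; rewrite has2_false // => b c _ ct.
by have := H c ct; case: ltngtP.
Qed.

Lemma Bad_cat u v : (forall x y, x \in u -> y \in v -> x < y) ->
  Bad (u ++ v) = Bad u || Bad v.
Proof.
elim: u => [|x u IH] //= H.
rewrite IH; last by move=> a b au bv; apply: H; rewrite ?inE ?au ?orbT.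
rewrite has2_cat_false ?orbA // => b c cv.
by have := H x c (mem_head _ _) cv; case: ltngtP.
Qed.

Lemma Bad_suffix u v : Bad (u ++ v) = false -> Bad v = false.
Proof. by elim: u => [|x u IH] //= /norP [_ /negbTE /IH]. Qed.

Lemma Bad_iota a L : Bad (iota a L) = false.
Proof.
elim: L a => [|L IH] a //=.
rewrite has2_false ?IH // => b c _; rewrite mem_iota => /andP [H _].
by case: ltngtP H.
Qed.

Lemma has2_iota (Q : nat -> nat -> bool) a L :
  (forall b c, b < c -> ~~ Q b c) -> has2 Q (iota a L) = false.
Proof.
move=> H; elim: L a => [|L IH] a //=.
rewrite IH orbF; apply/negbTE/hasPn => c; rewrite mem_iota => /andP [ac _].
exact: H.
Qed.

Lemma Bad_top M a L : Bad (M :: iota a L) = false.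
Proof.
rewrite /= Bad_iota orbF has2_iota // => b c bc.
by apply/negP => /andP [_ H]; case: ltngtP bc H.
Qed.

Lemma Cov_cat s u v : (forall x y, x \in u -> y \in v -> ~~ comb_cover s y x) ->
  Cov s (u ++ v) = Cov s u && Cov s v.
Proof.
elim: u => [|x u IH] //= H.
rewrite IH ?andbA; last by move=> a b au bv; apply: H; rewrite ?inE ?au ?orbT.
rewrite has_cat.
have -> : has (fun y => comb_cover s y x) v = false.
  by apply/negbTE/hasPn => y yv; apply: H; rewrite ?mem_head.
by rewrite orbF.
Qed.

Lemma Cov_cat_r s u v : Cov s (u ++ v) -> Cov s v.
Proof. by elim: u => [|x u IH] //= /andP [_ /IH]. Qed.

Lemma Cov_iota s a L : Cov s (iota a L).
Proof.
elim: L a => [|L IH] a //=; rewrite IH andbT.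
apply/hasPn => y; rewrite mem_iota => /andP [ay _].
by apply/negP => /cover_lt; case: ltngtP ay.
Qed.

Lemma strip M v : (forall z, z \in v -> M < z) -> forall L a t',
  a + L = M -> Bad (M :: t') = false -> perm_eq t' (iota a L ++ v) ->
  exists2 t'', t' = iota a L ++ t'' & perm_eq t'' v.
Proof.
move=> Hv; elim=> [|L IH] a t' aL bt pt; first by exists t'.
case: t' bt pt => [|y r] bt pt.
  by have := perm_size pt; rewrite size_cat size_iota.
have [ay|nay] := eqVneq y a.
  subst y; move: pt; rewrite /= perm_cons => pr.
  have brM : Bad (M :: r) = false.
    by move: bt => /= /norP [/norP [_ h1] /norP [_ h2]]; rewrite /= (negbTE h1) (negbTE h2).
  have [t'' -> pt''] := IH a.+1 r ltac:(lia) brM pr.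
  by exists t''.
have ain : a \in r.
  have : a \in y :: r by rewrite (perm_mem pt) mem_cat mem_iota leqnn /= addnS ltnS leq_addr.
  by rewrite inE eq_sym (negbTE nay).
have ya : a < y.
  have : y \in iota a L.+1 ++ v by rewrite -(perm_mem pt) mem_head.
  rewrite mem_cat mem_iota => /orP [/andP [H _]|/Hv H].
    by rewrite ltn_neqAle eq_sym nay H.
  lia.
move: bt => /= /norP [/norP [/hasPn /(_ a ain)]].
by rewrite ya andbT; case: ltngtP aL => //; lia.
Qed.

Fixpoint gen (s k m : nat) : seq (seq nat) :=
  if k is k'.+1 then
    if 2 * s <= m then [:: [::]] else
    [seq m.+1 :: t | t <- gen s k' m.+1] ++
    flatten [seq [seq M :: (iota m.+1 (M - m.+1) ++ t) | t <- gen s k' M]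
              | M <- [seq M <- iota m.+2 (2 * s - m.+1) | (s < M) && (M <= m + s)]]
  else [:: [::]].

Lemma gen_base s m t : m = 2 * s ->
  (t \in [:: [::]]) = [&& perm_eq t (iota m.+1 (2 * s - m)), Cov s t & ~~ Bad t].
Proof.
move=> ->; rewrite subnn inE; case: t => [|x t] //=.
by apply/esym/negbTE; apply/negP => /andP [/perm_size].
Qed.

Lemma iota_split m M n : m < M <= n ->
  iota m.+1 (n - m) = iota m.+1 (M - m.+1) ++ M :: iota M.+1 (n - M).
Proof.
move=> H; have -> : n - m = (M - m.+1) + (n - M).+1 by lia.
by rewrite iotaD; have -> : m.+1 + (M - m.+1) = M by lia.
Qed.

Lemma perm_mid (M : nat) u t v : perm_eq (M :: u ++ t) (u ++ M :: v) = perm_eq t v.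
Proof.
have -> : M :: u ++ t = [:: M] ++ u ++ t by [].
by rewrite -(perm_catCA u [:: M] t) perm_cat2l perm_cons.
Qed.

Lemma gen_spec s k m t : 2 * s - m <= k -> m <= 2 * s ->
  (t \in gen s k m) = [&& perm_eq t (iota m.+1 (2 * s - m)), Cov s t & ~~ Bad t].
Proof.
elim: k m t => [|k IH] m t hk hm.
  by apply: gen_base; lia.
rewrite /=; case: leqP => hm'.
  by apply: gen_base; lia.
have E1 : iota m.+1 (2 * s - m) = m.+1 :: iota m.+2 (2 * s - m.+1).
  by have -> : 2 * s - m = (2 * s - m.+1).+1 by lia.
rewrite mem_cat; apply/idP/idP.
  case/orP => [/mapP [t' t'g ->] | /flatten_mapP [M MMs /mapP [t' t'g ->]]].
    move: t'g; rewrite IH; try lia.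
    case/and3P => pt ct bt; rewrite E1 perm_cons pt /= ct andbT.
    have Ht : forall y, y \in t' -> m.+1 < y.
      by move=> y; rewrite (perm_mem pt) mem_iota => /andP [].
    rewrite -/(Bad (m.+1 :: t')) Bad_cons_small // bt andbT.
    apply/hasPn => y /Ht H; apply/negP => /cover_lt; lia.
  move: MMs; rewrite mem_filter mem_iota => /andP [/andP [sM Mms] /andP [mM Mn]].
  move: t'g; rewrite IH; try lia.
  case/and3P => pt ct bt.
  have Ht : forall y, y \in t' -> M < y.
    by move=> y; rewrite (perm_mem pt) mem_iota => /andP [].
  rewrite (iota_split (M := M)); last by lia.
  rewrite perm_mid pt /=.
  apply/andP; split; last first.
    rewrite -/(Bad (M :: iota m.+1 (M - m.+1) ++ t')) -cat_cons Bad_cat ?Bad_top //.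
    move=> x y; rewrite inE mem_iota => /orP [/eqP -> /Ht //|/andP [_ H] /Ht]; lia.
  rewrite has_cat negb_or Cov_cat ?Cov_iota ?ct ?andbT; last first.
    move=> x y; rewrite mem_iota => /andP [_ H] /Ht H'; apply/negP => /cover_lt; lia.
  apply/andP; split.
    apply/hasPn => y; rewrite mem_iota => /andP [H1 H2].
    rewrite /comb_cover; apply/negP => /orP [/and3P [? ? /eqP]|/and3P [? ? /eqP]]; lia.
  apply/hasPn => y /Ht H; apply/negP => /cover_lt; lia.
case/and3P; case: t => [|x t'] pt ct bt.
  by have := perm_size pt; rewrite size_iota /=; lia.
have uxt : uniq (x :: t') by rewrite (perm_uniq pt) iota_uniq.
have : x \in iota m.+1 (2 * s - m) by rewrite -(perm_mem pt) mem_head.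
rewrite mem_iota => /andP [mx xn].
have [xm|xm] := eqVneq x m.+1.
  subst x; apply/orP; left; apply/mapP; exists t' => //.
  rewrite IH; try lia.
  move: pt ct bt; rewrite E1 perm_cons /= => -> /andP [_ ->].
  by rewrite negb_or => /andP [_ ->].
apply/orP; right.
have mM : m.+1 < x by rewrite ltn_neqAle eq_sym xm mx.
move: pt; rewrite (iota_split (M := x)); last by lia.
set u := iota m.+1 (x - m.+1); set v := iota x.+1 (2 * s - x) => pt0.
have pt : perm_eq t' (u ++ v).
  rewrite -(perm_cons x); apply: perm_trans pt0 _.
  by rewrite (perm_catCA u [:: x] v).
have bM : Bad (x :: t') = false by apply/negbTE.
have Hv : forall z, z \in v -> x < z by move=> z; rewrite mem_iota => /andP [].
have aL : m.+1 + (x - m.+1) = x by lia.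
have [t'' Et pt''] := strip Hv aL bM pt.
subst t'.
have ct' : ~~ has (fun y => comb_cover s y x) (iota m.+1 (x - m.+1) ++ t'') by case/andP: ct.
have sx : s < x.
  rewrite ltnNge; apply/negP => xs.
  case/negP: ct'; rewrite has_cat; apply/orP; left; apply/hasP; exists x.-1.
    rewrite mem_iota; lia.
  by rewrite /comb_cover; apply/orP; left; apply/and3P; split; try lia; apply/eqP; lia.
have xms : x <= m + s.
  rewrite leqNgt; apply/negP => xs.
  case/negP: ct'; rewrite has_cat; apply/orP; left; apply/hasP; exists (x - s).
    rewrite mem_iota; lia.
  by rewrite /comb_cover; apply/orP; right; apply/and3P; split; try lia; apply/eqP; lia.
apply/flatten_mapP; exists x.
  by rewrite mem_filter mem_iota sx xms mM /=; lia.
apply/mapP; exists t'' => //.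
rewrite IH; try lia.
rewrite pt'' /=.
have bt'' := @Bad_suffix (x :: iota m.+1 (x - m.+1)) t'' bM.
rewrite bt'' andbT.
exact: (@Cov_cat_r s (x :: iota m.+1 (x - m.+1)) t'' ct).
Qed.

Lemma uniq_flatten_head (Ms : seq nat) (F : nat -> seq (seq nat)) :
  uniq Ms -> (forall M, uniq (F M)) -> (forall M t, t \in F M -> head 0 t = M) ->
  uniq (flatten (map F Ms)).
Proof.
move=> uM uF hF; elim: Ms uM => [|M Ms IH] //= /andP [MMs uMs].
rewrite cat_uniq uF IH // andbT; apply/hasPn => t /flatten_mapP [M' M'Ms tF'].
apply/negP => tF; have := hF _ _ tF; rewrite (hF _ _ tF') => E.
by move: MMs; rewrite -E M'Ms.
Qed.

Lemma gen_uniq s k m : uniq (gen s k m).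
Proof.
elim: k m => [|k IH] m //=; case: leqP => // hm.
rewrite cat_uniq map_inj_uniq ?IH /=; last by move=> ? ? [].
apply/andP; split.
  apply/hasPn => t /flatten_mapP [M]; rewrite mem_filter mem_iota => /andP [_ /andP [H _]].
  case/mapP => t' _ ->; apply/negP => /mapP [t'' _ [E _]]; lia.
apply: uniq_flatten_head.
- by rewrite filter_uniq ?iota_uniq.
- move=> M; rewrite map_inj_uniq ?IH // => a b [].
  by move/(congr1 (drop (size (iota m.+1 (M - m.+1))))); rewrite !drop_size_cat.
- by move=> M t /mapP [t' _ ->].
Qed.

Definition G s m := if s <= m then 2 ^ (2 * s - m.+1)
  else 2 ^ (s - 1) * (s - m + 1) + 1 - 2 ^ (s - m).

Lemma geo n L a : a + L = n.+1 -> 0 < L ->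
  sumn (map (fun M => 2 ^ (n - M.+1)) (iota a L)) = 2 ^ (n - a).
Proof.
elim: L a => [|L IH] a // aL _.
case: L IH aL => [|L] IH aL.
  rewrite /= addn0; have -> : n - a.+1 = 0 by lia.
  by have -> : n - a = 0 by lia.
have -> : iota a L.+2 = [:: a] ++ iota a.+1 L.+1 by [].
rewrite map_cat sumn_cat IH; try lia.
rewrite /= addn0.
have -> : n - a = (n - a.+1).+1 by lia.
by rewrite expnS mul2n -addnn.
Qed.

Lemma Tsum s m : m < s ->
  sumn (map (fun M => 2 ^ (2 * s - M.+1)) (iota s.+1 m)) + 2 ^ (s - m.+1) = 2 ^ (s - 1).
Proof.
elim: m => [|m IH] H; first by rewrite /= subn1.
have -> : iota s.+1 m.+1 = iota s.+1 m ++ [:: s.+1 + m] by rewrite -(addn1 m) iotaD.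
rewrite map_cat sumn_cat /= addn0 -addnA.
have -> : 2 * s - (s.+1 + m).+1 = s - (m + 1).+1 by lia.
have -> : s - m.+2 = s - (m + 1).+1 by lia.
rewrite -IH; last by lia.
have -> : s - m.+1 = (s - (m + 1).+1).+1 by lia.
rewrite [in RHS]expnS; lia.
Qed.

Lemma G_rec s m : 0 < s -> m < 2 * s ->
  G s m = G s m.+1 + sumn (map (G s) [seq M <- iota m.+2 (2 * s - m.+1) | (s < M) && (M <= m + s)]).
Proof.
move=> s0 ms; case: (leqP s m) => sm.
  have -> : [seq M <- iota m.+2 (2 * s - m.+1) | (s < M) && (M <= m + s)] = iota m.+2 (2 * s - m.+1).
    rewrite -[RHS]filter_predT; apply: eq_in_filter => M; rewrite mem_iota => H /=; lia.
  have -> : map (G s) (iota m.+2 (2 * s - m.+1)) = map (fun M => 2 ^ (2 * s - M.+1)) (iota m.+2 (2 * s - m.+1)).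
    apply/eq_in_map => M; rewrite mem_iota /G => H; have -> : s <= M by lia.
    by [].
  rewrite /G sm (_ : s <= m.+1); last by lia.
  case E: (2 * s - m.+1) => [|L].
    by rewrite /= addn0; have -> : 2 * s - m.+2 = 0 by lia.
  rewrite geo; try lia.
  have -> : 2 * s - m.+2 = L by lia.
  by rewrite expnS mul2n -addnn.
have -> : [seq M <- iota m.+2 (2 * s - m.+1) | (s < M) && (M <= m + s)] = iota s.+1 m.
  have -> : 2 * s - m.+1 = (s - m.+1) + (m + (s - m)) by lia.
  rewrite iotaD iotaD filter_cat filter_cat.
  rewrite (@eq_in_filter _ _ pred0); last first.
    by move=> M; rewrite mem_iota => H /=; apply/negbTE; apply/negP => /andP [? ?]; lia.
  rewrite (@eq_in_filter _ _ predT (iota (m.+2 + (s - m.+1)) m)); last first.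
    by move=> M; rewrite mem_iota => H /=; lia.
  rewrite (@eq_in_filter _ _ pred0 (iota (m.+2 + (s - m.+1) + m) (s - m))); last first.
    by move=> M; rewrite mem_iota => H /=; apply/negbTE; apply/negP => /andP [? ?]; lia.
  rewrite filter_pred0 filter_predT filter_pred0 cats0 /=.
  by have -> : m.+2 + (s - m.+1) = s.+1 by lia.
have -> : map (G s) (iota s.+1 m) = map (fun M => 2 ^ (2 * s - M.+1)) (iota s.+1 m).
  apply/eq_in_map => M; rewrite mem_iota /G => H; have -> : s <= M by lia.
  by [].
have T := Tsum sm.
set T0 := sumn _ in T *.
rewrite /G leqNgt sm /=.
case: (leqP s m.+1) => sm1.
  have Es : s = m.+1 by lia.
  have e1 : s - m.+1 = 0 by lia.
  have e2 : s - 1 = m by lia.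
  have e3 : s - m + 1 = 2 by lia.
  have e4 : s - m = 1 by lia.
  have e5 : 2 * s - m.+2 = m by lia.
  rewrite e1 e2 expn0 in T; rewrite e2 e3 e4 e5 expn1; lia.
set P := 2 ^ (s - 1) in T *.
set q := 2 ^ (s - m.+1) in T.
have -> : 2 ^ (s - m) = 2 * q by rewrite /q -expnS; congr (2 ^ _); lia.
have -> : s - m + 1 = (s - m.+1).+1.+1 by lia.
have -> : s - m.+1 + 1 = (s - m.+1).+1 by lia.
rewrite !mulnS.
have : P <= P * (s - m.+1) by rewrite leq_pmulr //; lia.
lia.
Qed.

Lemma gen_size s k m : 0 < s -> 2 * s - m <= k -> m <= 2 * s -> size (gen s k m) = G s m.
Proof.
move=> s0; elim: k m => [|k IH] m hk hm.
  have -> : m = 2 * s by lia.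
  rewrite /G (_ : s <= 2 * s); last by lia.
  by have -> : 2 * s - (2 * s).+1 = 0 by lia.
rewrite /=; case: leqP => hm'.
  have -> : m = 2 * s by lia.
  rewrite /G (_ : s <= 2 * s); last by lia.
  by have -> : 2 * s - (2 * s).+1 = 0 by lia.
rewrite size_cat size_map size_flatten /shape -map_comp IH; try lia.
rewrite (@G_rec s m s0 hm'); congr (_ + sumn _).
apply/eq_in_map => M; rewrite mem_filter mem_iota => /andP [_ /andP [H1 H2]] /=.
by rewrite size_map IH; lia.
Qed.

Unset Implicit Arguments.
Theorem mainTheorem11 (s : nat) : 1 <= s ->
  A231_321_comb s = 2 ^ (s - 1) * (s - 1) + 1.
Proof.
move=> s0.
have pe : perm_eq [seq w <- permutations (iota 1 (2 * s)) |
                    lin_ext s w && ~~ contains231 w && ~~ contains321 w] (gen s (2 * s) 0).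
  apply: uniq_perm; first by rewrite filter_uniq // permutations_uniq.
    exact: gen_uniq.
  move=> w; rewrite mem_filter mem_permutations gen_spec ?subn0 ?leqnn //.
  case pw : (perm_eq w (iota 1 (2 * s))); last by rewrite andbF.
  have uw : uniq w by rewrite (perm_uniq pw) iota_uniq.
  by rewrite andbT linext_Cov // -andbA -negb_or contains_Bad.
rewrite /A231_321_comb -size_filter (perm_size pe) gen_size //.
rewrite /G leqNgt s0 subn0.
have -> : s = (s - 1).+1 by lia.
rewrite subSS subn0 expnS.
set P := 2 ^ (s - 1).
have -> : (s - 1).+1 + 1 = (s - 1).+2 by lia.
rewrite !mulnS /=; set Q := P * (s - 1); lia.
by rewrite subn0.
Qed.
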